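(* Let $\alpha>0$ and $T^{(1)}_\lambda(\alpha,\Delta t)=(1-\alpha\Delta t\lambda)^{-1}$. The explicit Euler time integration of $dy/dt=T^{(1)}_\lambda(\alpha,\Delta t)\lambda y$, namely $y^{n+1}=y^n+\Delta t\,T^{(1)}_\lambda(\alpha,\Delta t)\lambda y^n$, is unconditionally stable, i.e. $|y^n+\Delta t\,T^{(1)}_\lambda(\alpha,\Delta t)\lambda y^n|\leq|y^n|$ for all $\Delta t>0$, all $\lambda\in\mathbb{C}$ with $\mathrm{Re}(\lambda)\leq 0$ and all $y^n\in\mathbb{C}$, if and only if $\alpha\geq 0.5$. *)

(* Defs.v *)
From HB Require Import structures.
From mathcomp Require Import all_boot all_order all_algebra.
From mathcomp Require Import complex.
Set Implicit Arguments. Unset Strict Implicit. Unset Printing Implicit Defensive.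
Import Order.TTheory GRing.Theory Num.Theory.
Local Open Scope ring_scope.
Local Open Scope complex_scope.

Definition T1 (R : rcfType) (alpha dt : R) (lam : R[i]) : R[i] :=
  (1 - alpha%:C * dt%:C * lam)^-1.

Definition euler_step (R : rcfType) (alpha dt : R) (lam y : R[i]) : R[i] :=
  y + dt%:C * T1 alpha dt lam * lam * y.

(* Main.v *)
Require Import Defs.
From HB Require Import structures.
From mathcomp Require Import all_boot all_order all_algebra.
From mathcomp Require Import complex.
From mathcomp Require Import ring lra.
Import Order.TTheory GRing.Theory Num.Theory.
Local Open Scope ring_scope.
Local Open Scope complex_scope.

Lemma ReC (R : rcfType) (z : R[i]) : Re z = (complex.Re z)%:C.
Proof. by rewrite ReJ_add /Re unlock. Qed.

Lemma normC_le (R : rcfType) (u v : R[i]) :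
  (`|u| <= `|v|) = (complex.Re u ^+2 + complex.Im u ^+2 <= complex.Re v ^+2 + complex.Im v ^+2).
Proof. rewrite !normc_def lecR ler_sqrt //. by rewrite addr_ge0 // sqr_ge0. Qed.

Lemma key (R : rcfType) (alpha t a b : R) : 1/2 <= alpha -> 0 < t -> a <= 0 ->
  `|(1 - alpha%:C * t%:C * (a +i* b)) + t%:C * (a +i* b)|
   <= `|1 - alpha%:C * t%:C * (a +i* b)|.
Proof.
move=> ha ht hA; rewrite normC_le /=.
rewrite !(mul0r, mulr0, subr0, addr0, add0r, sub0r, opprK, oppr0).
have h1 : 0 <= t * (- a) by apply: mulr_ge0; lra.
have h2 : 0 <= (2 * alpha - 1) * (t ^+ 2 * (a ^+ 2 + b ^+ 2)).
  apply: mulr_ge0; first lra.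
  by apply: mulr_ge0; rewrite ?sqr_ge0 // addr_ge0 // sqr_ge0.
nra.
Qed.

Theorem lemma1 (R : rcfType) (alpha : R) (halpha : 0 < alpha) :
  (forall (dt : R) (lam y : R[i]), 0 < dt -> Re lam <= 0 ->
     `|euler_step alpha dt lam y| <= `|y|)
  <-> 1 / 2 <= alpha.
Proof.
split.
- move=> H; rewrite leNgt; apply/negP => hlt.
  pose t := 4 / (1 - 2 * alpha).
  have hpos : 0 < 1 - 2 * alpha by lra.
  have ht : 0 < t by rewrite /t divr_gt0 //; lra.
  have htt : t * (1 - 2 * alpha) = 4 by rewrite /t mulrC mulrCA divff ?mulr1 // gt_eqF.
  have hs : 0 < 1 + alpha * t by nra.
  clearbody t.
  have := H t (-1) 1 ht.
  have -> : euler_step alpha t (-1) 1 = (1 - t / (1 + alpha * t))%:C.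
    rewrite /euler_step /T1 mulr1.
    have e : 1 - alpha%:C * t%:C * (-1) = (1 + alpha*t)%:C.
      by rewrite rmorphD rmorph1 rmorphM mulrN1 opprK.
    rewrite e rmorphB rmorph1 rmorphM fmorphV.
    by rewrite mulrN1.
  rewrite normC_le /= !(expr0n, addr0, expr1n) => hk.
  have hre : Re (-1 : R[i]) <= 0.
    by rewrite ReC -[0 : R[i]]/((0:R)%:C) lecR /=; lra.
  have {}hk := hk hre.
  have hq : (t / (1 + alpha * t)) * (1 + alpha * t) = t by rewrite divfK // gt_eqF.
  have hq0 : 0 < t / (1 + alpha * t) by rewrite divr_gt0.
  move: hk hq hq0; set q := t / (1 + alpha * t) => hk hq hq0.
  have hq2 : q <= 2 by nra.
  nra.
- move=> ha dt lam y hdt; rewrite ReC -[0 : R[i]]/((0:R)%:C) lecR.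
  case: lam => a b /= hre.
  set u := 1 - alpha%:C * dt%:C * (a +i* b).
  have hu : u != 0.
    apply/eqP => h; have := congr1 (@complex.Re R) h; rewrite /u /=.
    rewrite !(mul0r, mulr0, subr0, addr0, add0r, sub0r, opprK, oppr0) => h2.
    have : 0 <= alpha * dt * (- a) by apply: mulr_ge0; [apply: mulr_ge0|]; lra.
    nra.
  have -> : euler_step alpha dt (a +i* b) y = y * ((u + dt%:C * (a +i* b)) / u).
    rewrite /euler_step /T1 -/u. field. exact: hu.
  rewrite normrM normf_div ler_piMr // ler_pdivrMr ?normr_gt0 // mul1r.
  exact: key.
Qed.
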